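(* Let $A>0$, $C>0$, $m>0$, $g>0$, $z>0$ and $\mathfrak{M}_3\in\mathbb{R}$. Consider the differential system on $\mathbb{R}^6$ (heavy symmetric top) $$\dot{\vec M}=\vec M\times \mathbb{I}^{-1}\vec M+mg\,\vec\gamma\times\vec r_G,\qquad \dot{\vec\gamma}=\vec\gamma\times\mathbb{I}^{-1}\vec M,$$ where $\vec M=(M_1,M_2,M_3)$, $\vec\gamma=(\gamma_1,\gamma_2,\gamma_3)$, $\mathbb{I}=\mathrm{diag}(A,A,C)$, $\vec r_G=(0,0,z)$ and $\times$ is the cross product in $\mathbb{R}^3$. The point $x_e=(0,0,\mathfrak{M}_3,0,0,1)$ is an equilibrium of this system, and the functions $$H=\tfrac12\Big(\tfrac{M_1^2}{A}+\tfrac{M_2^2}{A}+\tfrac{M_3^2}{C}\Big)+mgz\gamma_3,\quad C_1=\gamma_1^2+\gamma_2^2+\gamma_3^2,\quad C_2=M_1\gamma_1+M_2\gamma_2+M_3\gamma_3,\quad F=M_3$$ are conserved quantities. Then $x_e$ is stable with respect to the set of conserved quantities $\{H,C_1,C_2,F\}$ if and only if $\mathfrak{M}_3^2\geq 4Amgz$.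
   Context: Definition: an equilibrium point $x_e$ of a differential equation $\dot x=f(x)$ on an open set $D\subset\mathbb{R}^n$ is called stable with respect to a set of conserved quantities $\{F_1,\dots,F_k\}$ if there exists a continuous function $\Phi:\mathbb{R}^k\to\mathbb{R}$ such that the function $x\mapsto \Phi(F_1(x),\dots,F_k(x))-\Phi(F_1(x_e),\dots,F_k(x_e))$ is positive definite at $x_e$, i.e. it vanishes at $x_e$ and is strictly positive at every $x\neq x_e$ in some neighborhood of $x_e$. *)

(* Defs.v *)
From Stdlib Require Import Reals.
Open Scope R_scope.

Record vec6 : Type := mk6 { M1 : R; M2 : R; M3 : R; g1 : R; g2 : R; g3 : R }.

Definition dist6sq (x y : vec6) : R :=
  (M1 x - M1 y)^2 + (M2 x - M2 y)^2 + (M3 x - M3 y)^2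
  + (g1 x - g1 y)^2 + (g2 x - g2 y)^2 + (g3 x - g3 y)^2.

Definition continuous4 (Phi : R -> R -> R -> R -> R) : Prop :=
  forall a b c d eps, 0 < eps -> exists delta, 0 < delta /\
    forall a' b' c' d', Rabs (a' - a) < delta -> Rabs (b' - b) < delta ->
      Rabs (c' - c) < delta -> Rabs (d' - d) < delta ->
      Rabs (Phi a' b' c' d' - Phi a b c d) < eps.

Definition pos_def_at (V : vec6 -> R) (xe : vec6) : Prop :=
  V xe = 0 /\ exists r, 0 < r /\
    forall x, x <> xe -> dist6sq x xe < r^2 -> 0 < V x.

Definition stable_wrt4 (F1 F2 F3 F4 : vec6 -> R) (xe : vec6) : Prop :=
  exists Phi : R -> R -> R -> R -> R, continuous4 Phi /\
    pos_def_at (fun x => Phi (F1 x) (F2 x) (F3 x) (F4 x)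
                         - Phi (F1 xe) (F2 xe) (F3 xe) (F4 xe)) xe.

Definition cross (a1 a2 a3 b1 b2 b3 : R) : R * R * R :=
  (a2*b3 - a3*b2, a3*b1 - a1*b3, a1*b2 - a2*b1).

(* The vector field (for documentation; the stability notion does not use it). *)
Definition top_field (A C m g z : R) (x : vec6) : vec6 :=
  let '(w1, w2, w3) := (M1 x / A, M2 x / A, M3 x / C) in
  let '(p1, p2, p3) := cross (M1 x) (M2 x) (M3 x) w1 w2 w3 in
  let '(q1, q2, q3) := cross (g1 x) (g2 x) (g3 x) 0 0 z in
  let '(s1, s2, s3) := cross (g1 x) (g2 x) (g3 x) w1 w2 w3 in
  mk6 (p1 + m*g*q1) (p2 + m*g*q2) (p3 + m*g*q3) s1 s2 s3.

Definition Ham (A C m g z : R) (x : vec6) : R :=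
  / 2 * (M1 x ^ 2 / A + M2 x ^ 2 / A + M3 x ^ 2 / C) + m * g * z * g3 x.
Definition Cas1 (x : vec6) : R := g1 x ^ 2 + g2 x ^ 2 + g3 x ^ 2.
Definition Cas2 (x : vec6) : R := M1 x * g1 x + M2 x * g2 x + M3 x * g3 x.
Definition Fm3 (x : vec6) : R := M3 x.

Definition x_eq (Mf3 : R) : vec6 := mk6 0 0 Mf3 0 0 1.

(* Main.v *)
Require Import Defs.
From Stdlib Require Import Reals Lra Psatz.
Open Scope R_scope.

Lemma core (A C m g z s M1 M2 M3 g1 g2 g3 : R) :
  0 < A -> 0 < C -> 0 < m -> 0 < g -> 0 < z -> s ^ 2 >= 4 * A * m * g * z ->
  / 2 * (M1 ^ 2 / A + M2 ^ 2 / A + M3 ^ 2 / C) + m * g * z * g3 =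
  / 2 * (0 ^ 2 / A + 0 ^ 2 / A + s ^ 2 / C) + m * g * z * 1 ->
  g1 ^ 2 + g2 ^ 2 + g3 ^ 2 = 0 ^ 2 + 0 ^ 2 + 1 ^ 2 ->
  M1 * g1 + M2 * g2 + M3 * g3 = 0 * 0 + 0 * 0 + s * 1 ->
  M3 = s ->
  M1 = 0 /\ M2 = 0 /\ g1 = 0 /\ g2 = 0 /\ g3 = 1.
Proof.
  intros HA HC Hm Hg Hz Hs HH H1 H2 H3. subst M3.
  assert (HK : 0 < m * g * z) by (apply Rmult_lt_0_compat; [apply Rmult_lt_0_compat|]; lra).
  replace (4 * A * m * g * z) with (4 * A * (m * g * z)) in Hs by ring.
  set (K := m * g * z) in *. clearbody K.
  set (u := 1 - g3).
  assert (EM : M1 * M1 + M2 * M2 = 2 * A * K * u).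
  { unfold u. assert (HH' : / 2 * ((M1 ^ 2 + M2 ^ 2) / A) + K * g3 = K).
    { replace ((M1 ^ 2 + M2 ^ 2) / A) with (M1 ^ 2 / A + M2 ^ 2 / A) by (field; lra).
      replace (0 ^ 2 / A) with 0 in HH by (field; lra). lra. }
    apply (Rmult_eq_reg_r (/ (2 * A))); [|apply Rinv_neq_0_compat; lra].
    replace (M1 * M1 + M2 * M2) with (M1 ^ 2 + M2 ^ 2) by ring.
    replace ((M1 ^ 2 + M2 ^ 2) * / (2 * A)) with (/ 2 * ((M1 ^ 2 + M2 ^ 2) / A)) by (field; lra).
    replace (2 * A * K * (1 - g3) * / (2 * A)) with (K * (1 - g3)) by (field; lra).
    lra. }
  assert (Eg : g1 * g1 + g2 * g2 = u * (2 - u)) by (unfold u; nra).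
  assert (Ed : M1 * g1 + M2 * g2 = s * u) by (unfold u; nra).
  assert (Lag : (M1 * g1 + M2 * g2) ^ 2 + (M1 * g2 - M2 * g1) ^ 2 =
                (M1 * M1 + M2 * M2) * (g1 * g1 + g2 * g2)) by ring.
  rewrite EM, Eg, Ed in Lag.
  assert (Hu0 : 0 <= u).
  { assert (0 <= M1 * M1 + M2 * M2) by nra.
    assert (0 <= 2 * A * K * u) by lra.
    destruct (Rle_or_lt 0 u); auto.
    assert (2 * A * K * u < 0).
    { assert (0 < 2 * A * K) by (apply Rmult_lt_0_compat; lra).
      nra. }
    lra. }
  assert (Hu : u = 0).
  { destruct Hu0 as [Hu|]; auto. exfalso.
    assert (s ^ 2 * (u * u) <= (2 * A * K * (2 - u)) * (u * u)).
    { pose proof (pow2_ge_0 (M1 * g2 - M2 * g1)).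
      replace (s ^ 2 * (u * u)) with ((s * u) ^ 2) by ring.
      replace (2 * A * K * (2 - u) * (u * u)) with (2 * A * K * u * (u * (2 - u))) by ring.
      lra. }
    assert (0 < u * u) by nra.
    assert (s ^ 2 <= 2 * A * K * (2 - u)).
    { apply (Rmult_le_reg_r (u * u)); auto. }
    assert (0 < A * K * u) by (apply Rmult_lt_0_compat; [apply Rmult_lt_0_compat|]; lra).
    lra. }
  rewrite Hu in EM, Eg.
  assert (M1 = 0) by nra. assert (M2 = 0) by nra.
  assert (g1 = 0) by nra. assert (g2 = 0) by nra.
  unfold u in Hu. repeat split; lra.
Qed.

Theorem mainTheorem2 (A C m g z Mf3 : R) :
  0 < A -> 0 < C -> 0 < m -> 0 < g -> 0 < z ->
  (stable_wrt4 (Ham A C m g z) Cas1 Cas2 Fm3 (x_eq Mf3) <->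
   Mf3 ^ 2 >= 4 * A * m * g * z).
Proof.
  intros HA HC Hm Hg Hz.
  assert (HK : 0 < m * g * z) by (apply Rmult_lt_0_compat; [apply Rmult_lt_0_compat|]; lra).
  split.
  - intros [Phi [_ [_ [r [Hr Hpos]]]]].
    destruct (Rlt_or_le (Mf3 ^ 2) (4 * A * m * g * z)) as [Hlt|Hge];
      [|apply Rle_ge; exact Hge].
    exfalso.
    replace (4 * A * m * g * z) with (4 * A * (m * g * z)) in Hlt by ring.
    set (K := m * g * z) in *.
    assert (HAK : 0 < A * K) by (apply Rmult_lt_0_compat; lra).
    assert (Hr2 : 0 < r ^ 2) by (apply pow_lt; lra).
    set (u := Rmin (r ^ 2 / (2 * A * K + 2) / 2) (Rmin 1 ((4 * A * K - Mf3 ^ 2) / (2 * A * K)))).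
    assert (Hu0 : 0 < u).
    { unfold u. apply Rmin_glb_lt; [|apply Rmin_glb_lt].
      - apply Rmult_lt_0_compat; [apply Rdiv_lt_0_compat|]; lra.
      - lra.
      - apply Rdiv_lt_0_compat; lra. }
    assert (Hu1 : u <= 1) by (unfold u; eapply Rle_trans; [apply Rmin_r|apply Rmin_l]).
    assert (Hu2 : u <= (4 * A * K - Mf3 ^ 2) / (2 * A * K))
      by (unfold u; eapply Rle_trans; [apply Rmin_r|apply Rmin_r]).
    assert (Hu3 : u <= r ^ 2 / (2 * A * K + 2) / 2) by (unfold u; apply Rmin_l).
    clearbody u.
    assert (Hs : Mf3 ^ 2 <= 2 * A * K * (2 - u)).
    { assert (2 * A * K * u <= 4 * A * K - Mf3 ^ 2).
      { apply (Rmult_le_compat_l (2 * A * K)) in Hu2; [|lra].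
        replace (2 * A * K * ((4 * A * K - Mf3 ^ 2) / (2 * A * K)))
          with (4 * A * K - Mf3 ^ 2) in Hu2 by (field; lra). lra. }
      lra. }
    assert (Hdist : u * (2 * A * K + 2) < r ^ 2).
    { apply (Rmult_le_compat_r (2 * A * K + 2)) in Hu3; [|lra].
      replace (r ^ 2 / (2 * A * K + 2) / 2 * (2 * A * K + 2)) with (r ^ 2 / 2) in Hu3
        by (field; lra). lra. }
    assert (Hw : 0 < u * (2 - u)) by nra.
    set (a := sqrt (u * (2 - u))).
    assert (Ha : 0 < a) by (apply sqrt_lt_R0; lra).
    assert (Haa : a * a = u * (2 - u)) by (apply sqrt_sqrt; lra).
    clearbody a.
    set (p := Mf3 * u / a).
    assert (Hpa : p * a = Mf3 * u) by (unfold p; field; lra).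
    clearbody p.
    assert (Hq0 : 0 <= 2 * A * K * u - p * p).
    { assert (E : (2 * A * K * u - p * p) * (u * (2 - u)) =
                  (u * u) * (2 * A * K * (2 - u) - Mf3 ^ 2)).
      { rewrite <- Haa. replace ((2 * A * K * u - p * p) * (a * a))
          with (2 * A * K * u * (a * a) - (p * a) * (p * a)) by ring.
        rewrite Hpa, Haa. ring. }
      assert (0 <= (u * u) * (2 * A * K * (2 - u) - Mf3 ^ 2)).
      { apply Rmult_le_pos; nra. }
      destruct (Rle_or_lt 0 (2 * A * K * u - p * p)); auto. nra. }
    set (q := sqrt (2 * A * K * u - p * p)).
    assert (Hqq : q * q = 2 * A * K * u - p * p) by (apply sqrt_sqrt; lra).
    clearbody q.
    set (x := mk6 p q Mf3 a 0 (1 - u)).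
    assert (Hne : x <> x_eq Mf3).
    { intro heq. apply (f_equal g3) in heq. simpl in heq. lra. }
    assert (Hd : dist6sq x (x_eq Mf3) < r ^ 2).
    { unfold dist6sq, x, x_eq; simpl. nra. }
    specialize (Hpos x Hne Hd).
    assert (E1 : Ham A C m g z x = Ham A C m g z (x_eq Mf3)).
    { unfold Ham, x, x_eq; simpl. fold K.
      replace (p * (p * 1) / A + q * (q * 1) / A) with ((p * p + q * q) / A) by (field; lra).
      replace (p * p + q * q) with (2 * A * K * u) by lra. field. lra. }
    assert (E2 : Cas1 x = Cas1 (x_eq Mf3)) by (unfold Cas1, x, x_eq; simpl; nra).
    assert (E3 : Cas2 x = Cas2 (x_eq Mf3)) by (unfold Cas2, x, x_eq; simpl; nra).
    assert (E4 : Fm3 x = Fm3 (x_eq Mf3)) by (unfold Fm3, x, x_eq; simpl; lra).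
    rewrite E1, E2, E3, E4 in Hpos. lra.
  - intros Hs.
    set (h0 := Ham A C m g z (x_eq Mf3)).
    set (c10 := Cas1 (x_eq Mf3)).
    set (c20 := Cas2 (x_eq Mf3)).
    set (f0 := Fm3 (x_eq Mf3)).
    exists (fun a b c d => Rabs (a - h0) + Rabs (b - c10) + Rabs (c - c20) + Rabs (d - f0)).
    split.
    + intros a b c d eps He. exists (eps / 4). split; [lra|].
      intros a' b' c' d' Ha Hb Hc Hd.
      assert (forall x y x0, Rabs (Rabs (x - x0) - Rabs (y - x0)) <= Rabs (x - y)).
      { intros x y x0. replace (x - y) with ((x - x0) - (y - x0)) by ring.
        apply Rabs_triang_inv2. }
      pose proof (H a' a h0). pose proof (H b' b c10). pose proof (H c' c c20).
      pose proof (H d' d f0).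
      match goal with |- Rabs ?L < _ =>
        replace L with (((Rabs (a' - h0) - Rabs (a - h0)) + (Rabs (b' - c10) - Rabs (b - c10)))
          + ((Rabs (c' - c20) - Rabs (c - c20)) + (Rabs (d' - f0) - Rabs (d - f0)))) by ring end.
      eapply Rle_lt_trans; [apply Rabs_triang|].
      pose proof (Rabs_triang (Rabs (a' - h0) - Rabs (a - h0)) (Rabs (b' - c10) - Rabs (b - c10))).
      pose proof (Rabs_triang (Rabs (c' - c20) - Rabs (c - c20)) (Rabs (d' - f0) - Rabs (d - f0))).
      lra.
    + split.
      * ring.
      * exists 1. split; [lra|].
        intros x Hne _.
        assert (Z : Rabs (h0 - h0) + Rabs (c10 - c10) + Rabs (c20 - c20) + Rabs (f0 - f0) = 0)
          by (rewrite !Rminus_diag, Rabs_R0; ring).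
        fold h0 c10 c20 f0; rewrite Z, Rminus_0_r.
        destruct x as [y1 y2 y3 k1 k2 k3].
        destruct (Rle_or_lt (Rabs (Ham A C m g z (mk6 y1 y2 y3 k1 k2 k3) - h0) +
          Rabs (Cas1 (mk6 y1 y2 y3 k1 k2 k3) - c10) + Rabs (Cas2 (mk6 y1 y2 y3 k1 k2 k3) - c20) +
          Rabs (Fm3 (mk6 y1 y2 y3 k1 k2 k3) - f0)) 0) as [Hle|]; [|lra].
        exfalso. apply Hne.
        pose proof (Rabs_pos (Ham A C m g z (mk6 y1 y2 y3 k1 k2 k3) - h0)) as P1.
        pose proof (Rabs_pos (Cas1 (mk6 y1 y2 y3 k1 k2 k3) - c10)) as P2.
        pose proof (Rabs_pos (Cas2 (mk6 y1 y2 y3 k1 k2 k3) - c20)) as P3.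
        pose proof (Rabs_pos (Fm3 (mk6 y1 y2 y3 k1 k2 k3) - f0)) as P4.
        assert (Q : forall t, 0 <= Rabs t -> Rabs t <= 0 -> t = 0).
        { intros t _ Ht. destruct (Req_dec t 0) as [|Hn]; auto.
          pose proof (Rabs_pos_lt t Hn). lra. }
        assert (e1 := Q _ P1 ltac:(lra)). assert (e2 := Q _ P2 ltac:(lra)).
        assert (e3 := Q _ P3 ltac:(lra)). assert (e4 := Q _ P4 ltac:(lra)).
        unfold h0, c10, c20, f0, Ham, Cas1, Cas2, Fm3, x_eq in *; simpl in *.
        destruct (core A C m g z Mf3 y1 y2 y3 k1 k2 k3 HA HC Hm Hg Hz Hs)
          as [-> [-> [-> [-> ->]]]]; try lra.
        f_equal; lra.
Qed.
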